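(* Let $G$ be a finitely generated group, $p$ a prime, $x\in G$, and $k\ge 0$ an integer. Then $RG_p\big(G/\langle\langle x^{p^k}\rangle\rangle\big)\ge RG_p(G)-\frac{1}{p^k}$.
   Context: $\langle\langle y\rangle\rangle$ denotes the normal closure of $y$ in $G$. For a group $A$, $d(A)$ is the minimal number of generators and $d_p(A)=d\big(A/[A,A]A^p\big)$. For a finitely generated group $G$, $RG_p(G)=\inf_H\frac{d_p(H)-1}{[G:H]}$, the infimum over normal subgroups $H\trianglelefteq G$ of $p$-power index. *)

(* Defs.v *)
From HB Require Import structures.
From mathcomp Require Import all_boot all_order all_algebra.
From mathcomp Require Import boolp classical_sets reals.
Set Implicit Arguments. Unset Strict Implicit. Unset Printing Implicit Defensive.
Import Order.TTheory GRing.Theory Num.Theory.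

Record groupOps := GroupOps {
  gcar :> Type;
  gmul : gcar -> gcar -> gcar;
  ginv : gcar -> gcar;
  gone : gcar }.

Definition is_group (G : groupOps) : Prop :=
  [/\ (forall x y z : G, gmul x (gmul y z) = gmul (gmul x y) z),
      (forall x : G, gmul (gone G) x = x) &
      (forall x : G, gmul (ginv x) x = gone G)].

Section GroupDefs.
Variable G : groupOps.
Local Open Scope classical_set_scope.

Definition subgroup (H : set G) : Prop :=
  [/\ H (gone G), (forall x y, H x -> H y -> H (gmul x y)) &
      (forall x, H x -> H (ginv x))].

Definition normal (H : set G) : Prop :=
  subgroup H /\ forall g h, H h -> H (gmul (ginv g) (gmul h g)).

Definition gen (S : set G) : set G :=
  fun x => forall K, subgroup K -> S `<=` K -> K x.

Definition finitely_generated : Prop :=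
  exists n (f : 'I_n -> G), gen (range f) = setT.

Definition gexp (x : G) (n : nat) : G := iter n (gmul x) (gone G).

Definition gcomm (a b : G) : G := gmul (ginv a) (gmul (ginv b) (gmul a b)).

Definition normal_closure (y : G) : set G :=
  gen [set z | exists g, z = gmul (ginv g) (gmul y g)].

Definition frattini_p (p : nat) (H : set G) : set G :=
  gen [set y | (exists a b, [/\ H a, H b & y = gcomm a b]) \/
               (exists c, H c /\ y = gexp c p)].

(* H/[H,H]H^p is generated by (the images of) d elements of H *)
Definition gen_mod_p (p : nat) (H : set G) (d : nat) : Prop :=
  exists a : 'I_d -> G, (forall i, H (a i)) /\
    gen (range a `|` frattini_p p H) = H.

Definition dp (p : nat) (H : set G) : nat :=
  xget 0%N [set d | gen_mod_p p H d /\ forall d', gen_mod_p p H d' -> (d <= d')%N].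

Definition lcoset (g : G) (N : set G) : set G := fun x => N (gmul (ginv g) x).

(* [G : H] = m : the left cosets of H are in bijection with 'I_m *)
Definition has_index (H : set G) (m : nat) : Prop :=
  exists f : 'I_m -> G, forall g, exists! i, lcoset (f i) H g.

Definition RGp (R : realType) (p : nat) : R :=
  inf [set r : R | exists H n, [/\ normal H, has_index H (p ^ n)%N &
         r = (((dp p H)%:R - 1) / ((p ^ n)%N)%:R)%R]].

(* quotient group G / N (meaningful when N is normal) : left cosets of N *)
Definition qcar (N : set G) : Type := {A : set G | exists g, A = lcoset g N}.
Definition qrep (N : set G) (A : qcar N) : G := projT1 (cid (proj2_sig A)).
Definition qmk (N : set G) (g : G) : qcar N :=
  exist _ (lcoset g N) (ex_intro _ g erefl).

Definition quot (N : set G) : groupOps :=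
  @GroupOps (qcar N) (fun A B => qmk N (gmul (qrep A) (qrep B)))
    (fun A => qmk N (ginv (qrep A))) (qmk N (gone G)).
End GroupDefs.

(* Main.v *)
Require Import Defs.
From HB Require Import structures.
From mathcomp Require Import all_boot all_order all_algebra.
From mathcomp Require Import boolp classical_sets reals.
From mathcomp Require Import ring lra.
Import Order.TTheory GRing.Theory Num.Theory.
Set Implicit Arguments. Unset Strict Implicit. Unset Printing Implicit Defensive.
Local Open Scope classical_set_scope.


Section Basic.
Variable G : groupOps.
Hypothesis gG : is_group G.
Local Notation "a *g b" := (gmul a b) (at level 40, left associativity).
Local Notation "a ^-1g" := (ginv a) (at level 3, format "a ^-1g").
Local Notation "1g" := (gone G).

Lemma mulgA (a b c : G) : a *g (b *g c) = a *g b *g c.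
Proof. by case: gG. Qed.
Lemma mul1g (a : G) : 1g *g a = a.
Proof. by case: gG. Qed.
Lemma mulVg (a : G) : a^-1g *g a = 1g.
Proof. by case: gG. Qed.
Lemma mulgV (a : G) : a *g a^-1g = 1g.
Proof.
rewrite -{1}(mul1g (a *g a^-1g)) -{1}(mulVg (a^-1g)) -mulgA.
by rewrite (mulgA (a^-1g) a) mulVg mul1g mulVg.
Qed.
Lemma mulg1 (a : G) : a *g 1g = a.
Proof. by rewrite -(mulVg a) mulgA mulgV mul1g. Qed.
Lemma mulKg (a b : G) : a^-1g *g (a *g b) = b.
Proof. by rewrite mulgA mulVg mul1g. Qed.
Lemma mulKVg (a b : G) : a *g (a^-1g *g b) = b.
Proof. by rewrite mulgA mulgV mul1g. Qed.
Lemma mulgK (a b : G) : b *g a *g a^-1g = b.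
Proof. by rewrite -mulgA mulgV mulg1. Qed.
Lemma mulgKV (a b : G) : b *g a^-1g *g a = b.
Proof. by rewrite -mulgA mulVg mulg1. Qed.
Lemma mulgI (a b c : G) : a *g b = a *g c -> b = c.
Proof. by move=> h; rewrite -(mulKg a b) h mulKg. Qed.
Lemma mulIg (a b c : G) : b *g a = c *g a -> b = c.
Proof. by move=> h; rewrite -(mulgK a b) h mulgK. Qed.
Lemma invgK (a : G) : (a^-1g)^-1g = a.
Proof. by apply: (@mulIg (a^-1g)); rewrite mulVg mulgV. Qed.
Lemma invMg (a b : G) : (a *g b)^-1g = b^-1g *g a^-1g.
Proof.
apply: (@mulgI (a *g b)); rewrite mulgV -mulgA [X in _ *g X]mulgA mulgV mul1g.
by rewrite mulgV.
Qed.
Lemma invg1 : (1g)^-1g = 1g.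
Proof. by rewrite -{1}(mulg1 (ginv (gone G))) mulVg. Qed.
Lemma invg_eq1 (a b : G) : a *g b = 1g -> b = a^-1g.
Proof. by move=> h; apply: (@mulgI a); rewrite h mulgV. Qed.

Lemma sg1 (H : set G) : subgroup H -> H 1g. Proof. by case. Qed.
Lemma sgM (H : set G) a b : subgroup H -> H a -> H b -> H (a *g b).
Proof. by case=> _ h _; apply: h. Qed.
Lemma sgV (H : set G) a : subgroup H -> H a -> H (a^-1g).
Proof. by case=> _ _ h; apply: h. Qed.
Lemma sgVE (H : set G) a : subgroup H -> H (a^-1g) = H a.
Proof.
move=> sH; apply/propext; split=> h; last exact: sgV.
by rewrite -(invgK a); apply: sgV.
Qed.
Lemma sgMl (H : set G) a b : subgroup H -> H a -> H (a *g b) = H b.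
Proof.
move=> sH Ha; apply/propext; split=> h; last exact: sgM.
by rewrite -(mulKg a b); apply: sgM => //; apply: sgV.
Qed.
Lemma sgMr (H : set G) a b : subgroup H -> H b -> H (a *g b) = H a.
Proof.
move=> sH Hb; apply/propext; split=> h; last exact: sgM.
by rewrite -(mulgK b a); apply: sgM => //; apply: sgV.
Qed.
Lemma sgT : subgroup (@setT G).
Proof. by []. Qed.

Lemma gen_sub (S : set G) : subgroup (gen S).
Proof.
split.
- by move=> K sK _; apply: sg1.
- by move=> x y hx hy K sK SK; apply: sgM => //; [apply: hx|apply: hy].
- by move=> x hx K sK SK; apply: sgV => //; apply: hx.
Qed.
Lemma sub_gen (S : set G) : S `<=` gen S.
Proof. by move=> x Sx K _ SK; apply: SK. Qed.
Lemma gen_min (S K : set G) : subgroup K -> S `<=` K -> gen S `<=` K.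
Proof. by move=> sK SK x; apply. Qed.
Lemma gen_mono (S T : set G) : S `<=` T -> gen S `<=` gen T.
Proof.
by move=> ST; apply: gen_min; [apply: gen_sub| move=> x /ST; apply: sub_gen].
Qed.

Lemma nconj (N : set G) g h : normal N -> N h -> N (g^-1g *g (h *g g)).
Proof. by case=> _ n; apply: n. Qed.
Lemma nconjV (N : set G) g h : normal N -> N h -> N (g *g (h *g g^-1g)).
Proof. by move=> nN Nh; have := nconj (g^-1g) nN Nh; rewrite invgK. Qed.
Lemma nsg (N : set G) : normal N -> subgroup N. Proof. by case. Qed.

Lemma gexp0 (a : G) : gexp a 0 = 1g. Proof. by []. Qed.
Lemma gexpS (a : G) n : gexp a n.+1 = a *g gexp a n. Proof. by []. Qed.
Lemma gexpD (a : G) m n : gexp a (m + n) = gexp a m *g gexp a n.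
Proof. by elim: m => [|m IH]; rewrite ?mul1g // addSn !gexpS IH mulgA. Qed.
Lemma gexpM (a : G) m n : gexp a (m * n) = gexp (gexp a m) n.
Proof.
elim: n => [|n IH]; first by rewrite muln0.
by rewrite mulnS gexpD gexpS IH.
Qed.
Lemma gexpSr (a : G) n : gexp a n.+1 = gexp a n *g a.
Proof. by rewrite -addn1 gexpD /= mulg1. Qed.
Lemma gexp_conj (a g : G) n :
  g^-1g *g (gexp a n *g g) = gexp (g^-1g *g (a *g g)) n.
Proof.
elim: n => [|n IH]; first by rewrite /= mul1g mulVg.
rewrite !gexpS -IH -!mulgA; congr (_ *g _); rewrite !mulgA mulgK; done.
Qed.
Lemma sg_gexp (H : set G) a n : subgroup H -> H a -> H (gexp a n).
Proof.
move=> sH Ha; elim: n => [|n IH]; first exact: sg1.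
by rewrite gexpS; apply: sgM.
Qed.
Lemma gexp_comm (a : G) n : a *g gexp a n = gexp a n *g a.
Proof. by rewrite -gexpS gexpSr. Qed.

Lemma gcomm_conj (a h : G) : h^-1g *g (a *g h) = a *g gcomm a h.
Proof. by rewrite /gcomm mulKVg. Qed.

End Basic.


Section Quot.
Variable G : groupOps.
Hypothesis gG : is_group G.
Variable N : set G.
Hypothesis nN : normal N.
Local Notation "a *g b" := (gmul a b) (at level 40, left associativity).
Local Notation "a ^-1g" := (ginv a) (at level 3, format "a ^-1g").
Local Notation "1g" := (gone G).
Local Notation Q := (quot N).

Lemma qmk_eq (g h : G) : qmk N g = qmk N h <-> N (g^-1g *g h).
Proof.
have sN := nsg nN.
split.
- move=> /(congr1 sval) /= e.
  have : lcoset h N h by rewrite /lcoset mulVg //; apply: sg1.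
  by rewrite -e.
- move=> Ngh; apply: eq_exist; apply/funext => z; apply/propext; rewrite /lcoset.
  have -> : g^-1g *g z = (g^-1g *g h) *g (h^-1g *g z) by rewrite mulgA ?mulgK ?mulgKV //
     -(mulgA gG (g^-1g)) mulKVg.
  by rewrite sgMl.
Qed.

Lemma qrepK (A : Q) : qmk N (qrep A) = A.
Proof.
case: A => S pf; apply: eq_exist; rewrite /qrep /=.
by case: (cid pf) => g /= ->.
Qed.

Lemma qsurj (A : Q) : exists g, A = qmk N g.
Proof. by exists (qrep A); rewrite qrepK. Qed.

Lemma qrepP (g : G) : N (g^-1g *g qrep (qmk N g)).
Proof. by apply/qmk_eq; rewrite qrepK. Qed.

Lemma qmkM (g h : G) : qmk N (g *g h) = @gmul Q (qmk N g) (qmk N h).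
Proof.
apply/qmk_eq; have sN := nsg nN.
set g' := qrep (qmk N g); set h' := qrep (qmk N h).
have Ng := qrepP g; have Nh := qrepP h.
rewrite (invMg gG).
have -> : h^-1g *g g^-1g *g (g' *g h') =
   (h^-1g *g ((g^-1g *g g') *g h)) *g (h^-1g *g h').
  by rewrite !(mulgA gG) (mulgK gG).
by apply: sgM => //; apply: nconj.
Qed.

Lemma qmkV (g : G) : qmk N (g^-1g) = @ginv Q (qmk N g).
Proof.
apply/qmk_eq; have sN := nsg nN.
set g' := qrep (qmk N g); have Ng := qrepP g.
rewrite (invgK gG).
have -> : g *g g'^-1g = g *g ((g^-1g *g g')^-1g *g g^-1g).
  by rewrite (invMg gG) (invgK gG) -(mulgA gG) (mulgV gG) (mulg1 gG).
by apply: nconjV => //; apply: sgV.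
Qed.

Lemma qmk1 : qmk N 1g = gone Q. Proof. by []. Qed.

Lemma quot_group : is_group Q.
Proof.
split.
- move=> A B C; case: (qsurj A) => a ->; case: (qsurj B) => b ->;
  case: (qsurj C) => c ->.
  by rewrite -!qmkM (mulgA gG).
- by move=> A; case: (qsurj A) => a ->; rewrite -qmk1 -qmkM (mul1g gG).
- by move=> A; case: (qsurj A) => a ->; rewrite -qmkV -qmkM (mulVg gG).
Qed.

Lemma qexp (g : G) n : @gexp Q (qmk N g) n = qmk N (gexp g n).
Proof.
elim: n => [|n IH] //.
rewrite gexpS IH gexpS qmkM //.
Qed.

Lemma qcomm (a b : G) : @gcomm Q (qmk N a) (qmk N b) = qmk N (gcomm a b).
Proof. by rewrite /gcomm !qmkM !qmkV. Qed.

End Quot.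


Section Schreier.
Variable G : groupOps.
Hypothesis gG : is_group G.
Local Notation "a *g b" := (gmul a b) (at level 40, left associativity).
Local Notation "a ^-1g" := (ginv a) (at level 3, format "a ^-1g").
Local Notation "1g" := (gone G).
Variable H : set G.
Hypothesis sH : subgroup H.
Variable M : nat.
Variable f : 'I_M -> G.
Hypothesis hf : forall g, exists! i, lcoset (f i) H g.

Definition idx g := sval (cid (hf g)).
Lemma idxP g : H ((f (idx g))^-1g *g g).
Proof. by rewrite /idx; case: (cid (hf g)) => i [/= Hi _]. Qed.
Lemma idx_uniq g i : H ((f i)^-1g *g g) -> idx g = i.
Proof. by rewrite /idx; case: (cid (hf g)) => j [/= _ u] /u. Qed.

Lemma eqA4 (x y z w : G) : x *g (y *g z) *g (z^-1g *g w) = x *g (y *g w).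
Proof. by rewrite -!(mulgA gG) (mulKVg gG). Qed.

Lemma schreier_gen n (u : 'I_n -> G) : gen (range u) = setT ->
  exists d (a : 'I_d -> G), (forall i, H (a i)) /\ gen (range a) = H.
Proof.
move=> gu.
pose T := option ('I_n * 'I_M)%type.
pose a' (t : T) := match t with
  | None => f (idx 1g)
  | Some (s, i) => (f (idx (u s *g f i)))^-1g *g (u s *g f i) end.
pose a (j : 'I_#|{: T}|) := a' (enum_val j).
have ra t : range a (a' t) by exists (enum_rank t) => //; rewrite /a enum_rankK.
pose A := gen (range a).
have sA : subgroup A := gen_sub (range a).
have Ha' t : H (a' t).
  case: t => [[s i]|] /=; first exact: idxP.
  by rewrite -(sgVE gG) // -(mulg1 gG (_^-1g)); apply: idxP.
have AH : A `<=` H by apply: gen_min => // z [j _ <-]; apply: Ha'.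
pose P g := forall i, A ((f (idx (g *g f i)))^-1g *g (g *g f i)).
have sP : subgroup P.
  split.
  - move=> i; have e : idx (1g *g f i) = i.
      by apply: idx_uniq; rewrite (mul1g gG) (mulVg gG); apply: sg1.
    by rewrite e (mul1g gG) (mulVg gG); apply: sg1.
  - move=> g1 g2 P1 P2 i.
    set j2 := idx (g2 *g f i).
    have e : idx (g1 *g g2 *g f i) = idx (g1 *g f j2).
      apply: idx_uniq; rewrite -(mulgA gG) -(eqA4 _ _ (f j2)).
      by apply: sgM => //; apply: idxP.
    rewrite e -(mulgA gG) -(eqA4 _ _ (f j2)); apply: (sgM sA); [exact: (P1 j2)| exact: (P2 i)].
  - move=> g Pg i.
    set j := idx (g^-1g *g f i).
    have eq1 : ((f j)^-1g *g (g^-1g *g f i))^-1g = (f i)^-1g *g (g *g f j).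
      by rewrite !(invMg gG) !(invgK gG) (mulgA gG).
    have e : idx (g *g f j) = i.
      by apply: idx_uniq; rewrite -eq1 (sgVE gG) //; apply: idxP.
    have := Pg j; rewrite e -eq1 (sgVE gG) //.
have uP s : P (u s) by move=> i; apply: sub_gen; exact: (ra (Some (s, i))).
have Pall g : P g.
  have : gen (range u) g by rewrite gu.
  by apply; [exact: sP| move=> z [s _ <-]; apply: uP].
exists #|{: T}|, a; split; first by move=> j; apply: Ha'.
apply/seteqP; split => // h Hh.
set i0 := idx 1g.
have Hf0 : H (f i0) by apply: (Ha' None).
have Af0 : A (f i0) by apply: sub_gen; apply: (ra None).
have e : idx (h *g f i0) = i0.
  by apply: idx_uniq; apply: sgM => //; [apply: sgV | apply: sgM].
have := Pall h i0; rewrite e => Ah.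
have -> : h = f i0 *g ((f i0)^-1g *g (h *g f i0)) *g (f i0)^-1g.
  by rewrite (mulKVg gG) (mulgK gG).
by apply: (sgM sA); [apply: (sgM sA)| apply: (sgV sA)].
Qed.

End Schreier.

Section DP.
Variable G : groupOps.
Hypothesis gG : is_group G.
Local Notation "a *g b" := (gmul a b) (at level 40, left associativity).
Local Notation "a ^-1g" := (ginv a) (at level 3, format "a ^-1g").
Local Notation "1g" := (gone G).

Lemma frattini_sub p (H : set G) : subgroup H -> frattini_p p H `<=` H.
Proof.
move=> sH; apply: gen_min => // z [[a [b [Ha Hb ->]]]|[c [Hc ->]]].
- by rewrite /gcomm; repeat apply: sgM => //; apply: sgV.
- exact: sg_gexp.
Qed.

Lemma gen_mod_p_ex p (H : set G) M :
  finitely_generated G -> subgroup H -> has_index H M ->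
  exists d, gen_mod_p p H d.
Proof.
move=> [n [u gu]] sH [f hf].
have [d [a [Ha ga]]] := schreier_gen gG sH hf gu.
exists d, a; split => //; apply/seteqP; split.
- apply: gen_min => // z [[i _ <-]|]; [exact: Ha| exact: frattini_sub].
- by rewrite -{1}ga; apply: gen_mono; apply: subsetUl.
Qed.

Lemma dpP p (H : set G) : (exists d, gen_mod_p p H d) ->
  gen_mod_p p H (dp p H) /\ forall d', gen_mod_p p H d' -> (dp p H <= d')%N.
Proof.
move=> ex.
have ex' : exists d, `[< gen_mod_p p H d >] by case: ex => d h; exists d; apply/asboolP.
case: (ex_minnP ex') => m /asboolP hm mmin.
have : exists d, (gen_mod_p p H d /\ forall d', gen_mod_p p H d' -> (d <= d')%N).
  by exists m; split => // d' h; apply: mmin; apply/asboolP.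
by move/(xgetPex 0%N).
Qed.

End DP.


Section Count.
Variable G : groupOps.
Hypothesis gG : is_group G.
Local Notation "a *g b" := (gmul a b) (at level 40, left associativity).
Local Notation "a ^-1g" := (ginv a) (at level 3, format "a ^-1g").
Local Notation "1g" := (gone G).
Variable H : set G.
Hypothesis nH : normal H.
Variable M : nat.
Variable f : 'I_M -> G.
Hypothesis hf : forall g, exists! i, lcoset (f i) H g.
Variables (p : nat) (x : G) (k : nat).
Hypothesis pp : prime p.
Hypothesis Hy : H (gexp x (p ^ k)).

Lemma cosetE (a u v : G) : H (a^-1g *g u) -> H (a^-1g *g v) -> H (u^-1g *g v).
Proof.
move=> hu hv; have sH := nsg nH.
have -> : u^-1g *g v = (a^-1g *g u)^-1g *g (a^-1g *g v).
  by rewrite (invMg gG) (invgK gG) -(mulgA gG) (mulKVg gG).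
by apply: sgM => //; apply: sgV.
Qed.

Lemma conjM (y w h : G) :
  (w *g h)^-1g *g (y *g (w *g h)) = h^-1g *g ((w^-1g *g (y *g w)) *g h).
Proof. by rewrite (invMg gG) !(mulgA gG). Qed.

Lemma conj_comm (y z v : G) : z *g y = y *g z ->
  (z *g v)^-1g *g (y *g (z *g v)) = v^-1g *g (y *g v).
Proof.
move=> c; rewrite (invMg gG) -!(mulgA gG) (mulgA gG y) -c -(mulgA gG) (mulKg gG).
done.
Qed.

Lemma count_conj : exists c (b : 'I_c -> G), (forall j, H (b j)) /\
  (forall g, gen (range b `|` frattini_p p H) (g^-1g *g (gexp x (p ^ k) *g g))) /\
  (c * p ^ k <= M)%N.
Proof.
have sH := nsg nH.
set y := gexp x (p ^ k).
have ex : exists m, (0 < m)%N && `[< H (gexp x m) >].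
  by exists (p ^ k); rewrite expn_gt0 prime_gt0 //=; apply/asboolP.
case: (ex_minnP ex) => m /andP[m0 /asboolP Hm] mmin.
have mmin' r : (0 < r)%N -> H (gexp x r) -> (m <= r)%N.
  by move=> r0 Hr; apply: mmin; rewrite r0 /=; apply/asboolP.
have mdiv : (m %| p ^ k)%N.
  have e := divn_eq (p ^ k) m.
  have Hr : H (gexp x (p ^ k %% m)).
    have Hq : H (gexp x (p ^ k %/ m * m)).
      by rewrite mulnC (gexpM gG); apply: sg_gexp.
    by have := Hy; rewrite {1}e (gexpD gG) (sgMl gG _ sH Hq).
  case: (posnP (p ^ k %% m)) => [r0|rpos]; first by rewrite /dvdn r0.
  by have := mmin' _ rpos Hr; rewrite leqNgt ltn_pmod.
case: (eqVneq m (p ^ k)) => [em|nem]; last first.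
  move: mdiv => /(dvdn_pfactor _ _ pp) [j jk mj].
  have jk' : (j < k)%N by rewrite ltn_neqAle jk andbT; apply: contra_neq nem => e; rewrite mj e.
  pose s := p ^ (k - j).-1.
  have ek : p ^ k = m * (s * p).
    by rewrite mj -expnSr -expnD prednK ?subn_gt0 // subnKC // ltnW.
  exists 0%N, (fun _ => 1g); split; first by move=> _; apply: sg1.
  split => // g; apply: sub_gen; right; apply: sub_gen; right.
  exists (g^-1g *g (gexp (gexp x m) s *g g)); split.
    by apply: nconj => //; do 2 apply: (sg_gexp (H:=H)) => //.
  by rewrite /y ek !(gexpM gG) (gexp_conj gG).
pose X := gen [set x].
have Xc : X `<=` (fun z => z *g y = y *g z).
  apply: (gen_min (K := fun z => z *g y = y *g z)); last first.
    by move=> _ ->; rewrite /y (gexp_comm gG).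
  split.
  - by rewrite (mul1g gG) (mulg1 gG).
  - by move=> a b ha hb; rewrite -(mulgA gG) hb (mulgA gG) ha (mulgA gG).
  - move=> a ha; apply: (mulgI gG (a := a)).
    by rewrite (mulKVg gG) (mulgA gG) ha (mulgK gG).
have Xx n : X (gexp x n) by apply: (sg_gexp (H:=X)); [apply: gen_sub| apply: sub_gen].
pose rel i j := exists z, X z /\ H ((f i)^-1g *g (z *g f j)).
have rel_refl i : rel i i.
  by exists 1g; split; [apply: sg1; apply: gen_sub| rewrite (mul1g gG) (mulVg gG); apply: sg1].
have rel_trans i j l : rel i j -> rel j l -> rel i l.
  move=> [z1 [X1 H1]] [z2 [X2 H2]]; exists (z1 *g z2); split.
    by apply: (sgM (H:=X)) => //; apply: gen_sub.
  by rewrite -(mulgA gG) -(eqA4 gG _ _ (f j)); apply: sgM.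
pose S := [set r : 'I_M | `[< forall j, rel r j -> (r <= j)%N >]].
have repS i : exists2 r, r \in S & rel i r.
  case: (@arg_minnP _ i (fun j => `[< rel i j >]) (fun j => nat_of_ord j)).
    by apply/asboolP.
  move=> r /asboolP rir rmin; exists r => //.
  rewrite inE; apply/asboolP => j rj; apply: rmin; apply/asboolP.
  exact: rel_trans rir rj.
pose b (t : 'I_#|S|) := (f (enum_val t))^-1g *g (y *g f (enum_val t)).
have Hb t : H (b t) by apply: nconj.
exists #|S|, b; split => //; split.
  move=> g; set i := idx hf g.
  have Hi : H ((f i)^-1g *g g) := idxP hf g.
  case: (repS i) => r Sr [z [Xz Hz]].
  pose t := enum_rank_in Sr r.
  have et : enum_val t = r by rewrite /t enum_rankK_in.
  pose h := (z *g f r)^-1g *g g.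
  have Hh : H h.
    have -> : h = ((f i)^-1g *g (z *g f r))^-1g *g ((f i)^-1g *g g).
      by rewrite (invMg gG) (invgK gG) -(mulgA gG) (mulKVg gG).
    by apply: sgM => //; apply: sgV.
  have eg : g = (z *g f r) *g h by rewrite /h (mulKVg gG).
  rewrite eg conjM conj_comm ?Xc // -et -/(b t) (gcomm_conj gG).
  apply: (sgM (H := gen (range b `|` frattini_p p H))); first exact: gen_sub.
    by apply: sub_gen; left; apply: imageT.
  apply: sub_gen; right; apply: sub_gen; left; exists (b t), h; split => //.
have key a c : (a < m)%N -> (c <= a)%N -> H ((gexp x c)^-1g *g gexp x a) -> a = c.
  move=> am ca Ha'.
  have Ha : H (gexp x (a - c)).
    by move: Ha'; rewrite -{1}(subnKC ca) (gexpD gG) (mulKg gG).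
  case: (posnP (a - c)) => [d0|dpos].
    by apply/eqP; rewrite eqn_leq ca andbT -subn_eq0 d0.
  by have := mmin' _ dpos Ha; rewrite leqNgt (leq_ltn_trans (leq_subr c a) am).
pose phi (q : 'I_#|S| * 'I_m) := idx hf (gexp x q.2 *g f (enum_val q.1)).
have inj : injective phi.
  move=> [t1 s1] [t2 s2]; rewrite /phi /= => e.
  set r1 := enum_val t1; set r2 := enum_val t2.
  have H1 := idxP hf (gexp x s1 *g f r1); have H2 := idxP hf (gexp x s2 *g f r2).
  rewrite e in H1.
  have H21 := cosetE H2 H1; have H12 := cosetE H1 H2.
  have eq21 a1 a2 (u1 u2 : 'I_M) : (gexp x a2 *g f u2)^-1g *g (gexp x a1 *g f u1)
      = (f u2)^-1g *g (((gexp x a2)^-1g *g gexp x a1) *g f u1).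
    by rewrite (invMg gG) !(mulgA gG).
  have rel21 : rel r2 r1.
    exists ((gexp x s2)^-1g *g gexp x s1); rewrite -eq21; split => //.
    by apply: (sgM (H:=X)); [apply: gen_sub| apply: (sgV (H:=X)); [apply: gen_sub| apply: Xx] | apply: Xx].
  have rel12 : rel r1 r2.
    exists ((gexp x s1)^-1g *g gexp x s2); rewrite -eq21; split => //.
    by apply: (sgM (H:=X)); [apply: gen_sub| apply: (sgV (H:=X)); [apply: gen_sub| apply: Xx] | apply: Xx].
  have S1 : r1 \in S := enum_valP t1.
  have S2 : r2 \in S := enum_valP t2.
  move: S1 S2; rewrite !inE => /asboolP m1 /asboolP m2.
  have er : r1 = r2 by apply: val_inj; apply/eqP; rewrite eqn_leq m1 // m2.
  have et : t1 = t2 by apply: enum_val_inj; rewrite -/r1 -/r2.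
  have Hw : H ((gexp x s2)^-1g *g gexp x s1).
    have H21' := H21; rewrite eq21 -er in H21'.
    have := nconjV gG (f r1) nH H21'.
    by rewrite -(mulgA gG) (mulKVg gG) (mulgK gG).
  have es : s1 = s2.
    apply: val_inj => /=.
    case: (leqP (nat_of_ord s2) (nat_of_ord s1)) => [le|/ltnW le].
      exact: key (ltn_ord s1) le Hw.
    apply/esym; apply: key (ltn_ord s2) le _.
    by rewrite -(sgVE gG) // (invMg gG) (invgK gG).
  by rewrite et es.
have := leq_card phi inj; rewrite card_prod !card_ord.
by rewrite em.
Qed.

End Count.


Section NC.
Variable G : groupOps.
Hypothesis gG : is_group G.
Local Notation "a *g b" := (gmul a b) (at level 40, left associativity).
Local Notation "a ^-1g" := (ginv a) (at level 3, format "a ^-1g").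
Local Notation "1g" := (gone G).

Lemma nclosure_normal (y : G) : normal (normal_closure y).
Proof.
split; first exact: gen_sub.
move=> g h Nh.
pose C := fun h => normal_closure y (g^-1g *g (h *g g)).
have : normal_closure y `<=` C.
  apply: gen_min; last first.
    move=> _ [c ->]; apply: sub_gen; exists (c *g g).
    by rewrite /= (invMg gG) !(mulgA gG).
  split.
  - by rewrite /C (mul1g gG) (mulVg gG); exact: (sg1 (gen_sub _)).
  - move=> a b ha hb; rewrite /C -(mulgA gG) -(eqA4 gG _ _ g).
    by exact: (sgM (gen_sub _)).
  - move=> a ha; rewrite /C.
    have -> : g^-1g *g (a^-1g *g g) = (g^-1g *g (a *g g))^-1g.
      by rewrite !(invMg gG) (invgK gG) (mulgA gG).
    by exact: (sgV (gen_sub _)).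
by apply.
Qed.

Lemma fg_quot (N : set G) : normal N -> finitely_generated G ->
  finitely_generated (quot N).
Proof.
move=> nN [n [u gu]]; exists n, (fun i => qmk N (u i)).
apply/seteqP; split => // A _.
case: (qsurj A) => g ->.
pose P := fun g => @gen (quot N) (range (fun i => qmk N (u i))) (qmk N g).
have : gen (range u) `<=` P.
  apply: gen_min; last by move=> _ [s _ <-]; apply: sub_gen; apply: imageT.
  split.
  - by exact: (sg1 (gen_sub _)).
  - by move=> a b ha hb; rewrite /P (qmkM gG nN); exact: (sgM (gen_sub _)).
  - by move=> a ha; rewrite /P (qmkV gG nN); exact: (sgV (gen_sub _)).
by apply; rewrite gu.
Qed.

End NC.

Section Main.
Variable G : groupOps.
Hypothesis gG : is_group G.
Local Notation "a *g b" := (gmul a b) (at level 40, left associativity).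
Local Notation "a ^-1g" := (ginv a) (at level 3, format "a ^-1g").
Local Notation "1g" := (gone G).
Hypothesis fg : finitely_generated G.
Variables (p : nat) (x : G) (k : nat).
Hypothesis pp : prime p.
Local Notation N := (normal_closure (gexp x (p ^ k))).
Let nN : normal N := nclosure_normal gG _.
Local Notation Q := (quot N).
Let gQ : is_group Q := quot_group gG nN.
Variable K : set Q.
Hypothesis nK : normal K.
Variable n : nat.
Hypothesis hK : has_index K (p ^ n).

Lemma main_step : exists (H : set G) (c : nat),
  [/\ normal H, has_index H (p ^ n), (dp p H <= dp p K + c)%N & (c * p ^ k <= p ^ n)%N].
Proof.
pose H := fun g => K (qmk N g).
have sK := nsg nK.
have sH : subgroup H.
  split.
  - exact: (sg1 sK).
  - by move=> a b ha hb; rewrite /H (qmkM gG nN); exact: (sgM sK).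
  - by move=> a ha; rewrite /H (qmkV gG nN); exact: (sgV sK).
have nH : normal H.
  split=> // g h Hh; rewrite /H !(qmkM gG nN) (qmkV gG nN).
  by case: nK => _; apply.
have NH : N `<=` H.
  move=> z Nz; rewrite /H.
  have -> : qmk N z = qmk N 1g.
    by apply/(qmk_eq gG nN); rewrite (mulg1 gG); exact: (sgV (nsg nN)).
  exact: (sg1 sK).
case: hK => fK hfK.
have hfH : forall g, exists! i, lcoset (qrep (fK i)) H g.
  move=> g.
  have eq i : lcoset (qrep (fK i)) H g = lcoset (fK i) K (qmk N g).
    by rewrite /lcoset /H (qmkM gG nN) (qmkV gG nN) qrepK.
  case: (hfK (qmk N g)) => i [hi u]; exists i; split; first by rewrite eq.
  by move=> j; rewrite eq; apply: u.
have Hy : H (gexp x (p ^ k)).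
  apply: NH; apply: sub_gen; exists 1g.
  by rewrite (invg1 gG) (mul1g gG) (mulg1 gG).
case: (count_conj gG nH hfH pp Hy) => c [b [Hb [Cb cle]]].
have exK := gen_mod_p_ex gQ p (fg_quot gG nN fg) sK (ex_intro _ fK hfK).
case: (dpP exK) => [[a [Ka ga]] _].
pose e (i : 'I_(dp p K + c)) :=
  match split i with inl j => qrep (a j) | inr j => b j end.
have He i : H (e i).
  rewrite /e; case: (split i) => j; last exact: Hb.
  by rewrite /H qrepK.
have rea j : range e (qrep (a j)).
  by exists (unsplit (inl j)) => //; rewrite /e unsplitK.
have reb j : range e (b j).
  by exists (unsplit (inr j)) => //; rewrite /e unsplitK.
have gm : gen_mod_p p H (dp p K + c).
  exists e; split => //.
  apply/seteqP; split.
    apply: gen_min => // z [[i _ <-]|]; [exact: He| exact: frattini_sub].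
  pose A := gen (range e `|` frattini_p p H).
  have sA : subgroup A := gen_sub _.
  have NA : N `<=` A.
    apply: gen_min => // _ [g ->]; apply: (gen_mono _ (Cb g)).
    by move=> z [[j _ <-]|Fz]; [left; exact: reb| right].
  pose K' := fun q : Q => exists g, A g /\ q = qmk N g.
  have sK' : subgroup K'.
    split.
    - by exists 1g; split => //; exact: (sg1 sA).
    - move=> _ _ [g1 [A1 ->]] [g2 [A2 ->]]; exists (g1 *g g2).
      by rewrite (qmkM gG nN); split => //; exact: (sgM sA).
    - move=> _ [g1 [A1 ->]]; exists (g1^-1g).
      by rewrite (qmkV gG nN); split => //; exact: (sgV sA).
  have KK' : K `<=` K'.
    rewrite -ga; apply: gen_min => // q [[j _ <-]|Fq].
      exists (qrep (a j)); split; last by rewrite qrepK.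
      by apply: sub_gen; left; exact: rea.
    move: q Fq; apply: gen_min => // q [[u [v [Ku Kv ->]]]|[w [Kw ->]]].
      exists (gcomm (qrep u) (qrep v)); split; last by rewrite -(qcomm gG nN) !qrepK.
      apply: sub_gen; right; apply: sub_gen; left; exists (qrep u), (qrep v).
      by split => //; rewrite /H qrepK.
    exists (gexp (qrep w) p); split; last by rewrite -(qexp gG nN) qrepK.
    apply: sub_gen; right; apply: sub_gen; right; exists (qrep w).
    by split => //; rewrite /H qrepK.
  move=> h Hh; case: (KK' _ Hh) => g [Ag /esym /(qmk_eq gG nN) Ngh].
  rewrite -(mulKVg gG g h); exact: (sgM sA Ag (NA _ Ngh)).
exists H, c; split => //.
  by exists (fun i => qrep (fK i)).
exact: ((dpP (ex_intro _ _ gm)).2 _ gm).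
Qed.

End Main.

Local Close Scope classical_set_scope.
Local Open Scope ring_scope.

Lemma arith (R : realType) (I : R) (dH dK c P Pk : nat) : (0 < P)%N -> (0 < Pk)%N ->
  (dH <= dK + c)%N -> (c * Pk <= P)%N -> I <= (dH%:R - 1) / P%:R ->
  I - Pk%:R^-1 <= (dK%:R - 1) / P%:R.
Proof.
move=> P0 Pk0 le1 le2 hI.
have P0' : (0 : R) < P%:R by rewrite ltr0n.
have Pk0' : (0 : R) < Pk%:R by rewrite ltr0n.
have h3 : c%:R / P%:R <= Pk%:R^-1 :> R.
  rewrite ler_pdivrMr // -[X in X <= _](mulfK (lt0r_neq0 Pk0')) -natrM.
  rewrite mulrC ler_wpM2l ?invr_ge0 ?ler0n // ler_nat; rewrite ?le2 // mulnC.
have h2 : (dH%:R - 1) / P%:R <= (dK%:R - 1) / P%:R + c%:R / P%:R :> R.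
  rewrite -mulrDl; apply: ler_wpM2r; first by rewrite invr_ge0 ler0n.
  have : dH%:R <= (dK + c)%:R :> R by rewrite ler_nat.
  rewrite natrD; lra.
move: hI h2 h3; set A := (dH%:R - 1) / P%:R; set B := (dK%:R - 1) / P%:R.
set C := c%:R / P%:R; set D := Pk%:R^-1; lra.
Qed.

Lemma RGp_le (R : realType) (G : groupOps) p (H : set G) n : (0 < p)%N ->
  normal H -> has_index H (p ^ n) ->
  RGp G R p <= ((dp p H)%:R - 1) / ((p ^ n)%N)%:R.
Proof.
move=> p0 nH hH; rewrite /RGp; apply: ge_inf; last by exists H, n; split.
exists (-1) => _ [H' [n' [_ _ ->]]].
have P0 : (0 : R) < ((p ^ n')%N)%:R by rewrite ltr0n expn_gt0 p0.
have P1 : (1 : R) <= ((p ^ n')%N)%:R by rewrite ler1n expn_gt0 p0.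
have d0 : (0 : R) <= (dp p H')%:R by rewrite ler0n.
rewrite ler_pdivlMr //; lra.
Qed.

Unset Implicit Arguments.
Theorem theorem3p2 (R : realType) (G : groupOps) (p : nat) (x : G) (k : nat) :
  is_group G -> finitely_generated G -> prime p ->
  RGp G R p - ((p ^ k)%N)%:R^-1 <=
    RGp (quot (normal_closure (gexp x (p ^ k)%N))) R p.
Proof.
move=> gG fg pp.
have p0 := prime_gt0 pp.
rewrite [X in _ <= X]/RGp; apply: lb_le_inf.
  exists (((dp p (@setT (quot (normal_closure (gexp x (p ^ k)%N)))))%:R - 1) / ((p ^ 0)%N)%:R); exists setT, 0%N; split => //.
  exists (fun _ => gone _) => g.
  have h0 : (0 < p ^ 0)%N by rewrite expn0.
  exists (@Ordinal (p ^ 0) 0 h0); split => // j _.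
  by apply: val_inj => /=; case: j => [[|m] hm] //=; rewrite expn0 in hm.
move=> _ [K [n [nK hK ->]]].
case: (main_step gG fg pp nK hK) => H [c [nH hH le1 le2]].
apply: (@arith R (RGp G R p) (dp p H) (dp p K) c (p ^ n) (p ^ k)); rewrite ?expn_gt0 ?p0 //.
exact: RGp_le.
Qed.
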